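(* Let $T>0$ and let $\mathcal P: C[0,T]\to C[0,T]$ be an operator such that, for some $M>0$, $$|\mathcal P[q_1](t)-\mathcal P[q_2](t)|\le M\max_{\tau\in[0,t]}|q_1(\tau)-q_2(\tau)|\qquad\forall q_1,q_2\in C[0,T],\ \forall t\in[0,T].$$ Assume moreover that for every constant $c\ge 0$ the operator $I+c\mathcal P$ is a bijection of $C[0,T]$ onto itself whose inverse satisfies $$|(I+c\mathcal P)^{-1}[w_1](t)-(I+c\mathcal P)^{-1}[w_2](t)|\le L\max_{\tau\in[0,t]}|w_1(\tau)-w_2(\tau)|\qquad\forall w_1,w_2\in C[0,T],\ \forall t\in[0,T],$$ with a constant $L>0$ independent of $c$. Let $w,b\in C[0,T]$ with $b(t)\ge 0$ for all $t\in[0,T]$. Then there exists a unique $q\in C[0,T]$ such that $$q(t)+b(t)\,\mathcal P[q](t)=w(t)\qquad\forall t\in[0,T].$$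
   Context: $C[0,T]$ denotes the space of real continuous functions on $[0,T]$ and $I$ the identity operator. *)

(* Defs.v *)
From Stdlib Require Import Reals.
Open Scope R_scope.

(* f : R -> R is continuous on [0,T] (relative to [0,T]); its values outside
   [0,T] are irrelevant.  Elements of C[0,T] are such functions, identified
   up to their values on [0,T]. *)
Definition cont_on (T : R) (f : R -> R) : Prop :=
  forall t, 0 <= t <= T -> forall eps, eps > 0 ->
    exists delta, delta > 0 /\
      forall s, 0 <= s <= T -> Rabs (s - t) < delta -> Rabs (f s - f t) < eps.

Definition is_max_on (f : R -> R) (a b m : R) : Prop :=
  (exists x, a <= x <= b /\ f x = m) /\ (forall x, a <= x <= b -> f x <= m).

Definition IcP (P : (R -> R) -> (R -> R)) (c : R) (q : R -> R) : R -> R :=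
  fun s => q s + c * P q s.

(* Main.v *)
Require Import Defs.
From Stdlib Require Import Reals Lra Lia.
Open Scope R_scope.

Definition clamp (a b x : R) : R := Rmax a (Rmin b x).

Lemma clamp_in a b x : a <= b -> a <= clamp a b x <= b.
Proof. intros; unfold clamp, Rmax, Rmin; repeat destruct Rle_dec; lra. Qed.

Lemma clamp_id a b x : a <= x <= b -> clamp a b x = x.
Proof. intros; unfold clamp, Rmax, Rmin; repeat destruct Rle_dec; lra. Qed.

Lemma clamp_lip a b x y : a <= b -> Rabs (clamp a b x - clamp a b y) <= Rabs (x - y).
Proof.
  intros; unfold clamp, Rmax, Rmin; repeat destruct Rle_dec;
  unfold Rabs; repeat destruct Rcase_abs; lra.
Qed.

Lemma cont_to (T : R) f : 0 <= T -> cont_on T f -> continuity (fun x => f (clamp 0 T x)).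
Proof.
  intros hT hf x eps heps.
  destruct (hf (clamp 0 T x) (clamp_in 0 T x hT) eps heps) as [d [hd H]].
  exists d; split; auto.
  intros y [_ hy]. simpl in *. unfold Rdist in *.
  apply H. apply clamp_in; auto.
  eapply Rle_lt_trans; [apply clamp_lip; auto | exact hy].
Qed.

Lemma cont_from (T : R) f : continuity (fun x => f (clamp 0 T x)) -> cont_on T f.
Proof.
  intros hf t ht eps heps.
  destruct (hf t eps heps) as [d [hd H]].
  exists d; split; auto.
  intros s hs hst.
  destruct (Req_dec s t) as [->|hne]. rewrite Rminus_diag, Rabs_R0; lra.
  specialize (H s). simpl in H. unfold Rdist in H.
  rewrite !clamp_id in H by lra. apply H. split; [split; [exact I | auto] | auto].
Qed.

Lemma cont_plus T f g : 0 <= T -> cont_on T f -> cont_on T g -> cont_on T (fun x => f x + g x).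
Proof.
  intros hT hf hg. apply cont_from.
  apply (continuity_plus _ _ (cont_to T f hT hf) (cont_to T g hT hg)).
Qed.

Lemma cont_mult T f g : 0 <= T -> cont_on T f -> cont_on T g -> cont_on T (fun x => f x * g x).
Proof.
  intros hT hf hg. apply cont_from.
  apply (continuity_mult _ _ (cont_to T f hT hf) (cont_to T g hT hg)).
Qed.

Lemma cont_const T c : cont_on T (fun _ => c).
Proof. intros t ht eps heps; exists 1; split; [lra|]; intros; rewrite Rminus_diag, Rabs_R0; lra. Qed.

Lemma cont_ext T f g : (forall x, f x = g x) -> cont_on T f -> cont_on T g.
Proof. intros e hf t ht eps heps; destruct (hf t ht eps heps) as [d [hd H]]; exists d; split; auto; intros; rewrite <- !e; auto. Qed.

Lemma evt T f g t : 0 <= t <= T -> cont_on T f -> cont_on T g ->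
  exists m, is_max_on (fun s => Rabs (f s - g s)) 0 t m.
Proof.
  intros ht hf hg.
  assert (hT : 0 <= T) by lra.
  assert (C : continuity (fun x => Rabs (f (clamp 0 T x) - g (clamp 0 T x)))).
  { apply continuity_comp with (f2 := Rabs); [| apply Rcontinuity_abs].
    apply continuity_minus; apply cont_to; auto. }
  destruct (continuity_ab_maj _ 0 t (proj1 ht) (fun c _ => C c)) as [x [H1 H2]].
  exists (Rabs (f x - g x)); split.
  - exists x; split; auto.
  - intros y hy. specialize (H1 y hy). rewrite !clamp_id in H1 by lra. exact H1.
Qed.

Lemma bound_exists T f g b : 0 <= b <= T -> cont_on T f -> cont_on T g ->
  exists D, forall s, 0 <= s <= b -> Rabs (f s - g s) <= D.
Proof.
  intros hb hf hg. destruct (evt T f g b hb hf hg) as [m [_ H]]. exists m; exact H.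
Qed.

Lemma lipK T K (Phi : (R -> R) -> (R -> R)) :
  (forall q1 q2, cont_on T q1 -> cont_on T q2 ->
     forall t, 0 <= t <= T -> forall m,
       is_max_on (fun s => Rabs (q1 s - q2 s)) 0 t m ->
       Rabs (Phi q1 t - Phi q2 t) <= K * m) -> K >= 0 ->
  forall q1 q2, cont_on T q1 -> cont_on T q2 -> forall t, 0 <= t <= T -> forall B,
   (forall s, 0 <= s <= t -> Rabs (q1 s - q2 s) <= B) ->
   Rabs (Phi q1 t - Phi q2 t) <= K * B.
Proof.
  intros H hK q1 q2 h1 h2 t ht B hB.
  destruct (evt T q1 q2 t ht h1 h2) as [m hm].
  eapply Rle_trans; [apply (H q1 q2 h1 h2 t ht m hm)|].
  apply Rmult_le_compat_l; [lra|].
  destruct hm as [[x [hx <-]] _]. apply hB; auto.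
Qed.

Lemma lip0 T K (Phi : (R -> R) -> (R -> R)) :
  (forall q1 q2, cont_on T q1 -> cont_on T q2 ->
     forall t, 0 <= t <= T -> forall m,
       is_max_on (fun s => Rabs (q1 s - q2 s)) 0 t m ->
       Rabs (Phi q1 t - Phi q2 t) <= K * m) -> K >= 0 ->
  forall q1 q2, cont_on T q1 -> cont_on T q2 -> forall t, 0 <= t <= T ->
   (forall s, 0 <= s <= t -> q1 s = q2 s) -> Phi q1 t = Phi q2 t.
Proof.
  intros H hK q1 q2 h1 h2 t ht e.
  assert (X := lipK T K Phi H hK q1 q2 h1 h2 t ht 0).
  assert (Rabs (Phi q1 t - Phi q2 t) <= 0).
  { rewrite Rmult_0_r in X. apply X. intros s hs. rewrite e by auto. rewrite Rminus_diag, Rabs_R0; lra. }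
  assert (Y := Rabs_pos (Phi q1 t - Phi q2 t)).
  assert (Rabs (Phi q1 t - Phi q2 t) = 0) by lra.
  destruct (Rcase_abs (Phi q1 t - Phi q2 t)); [rewrite Rabs_left in H1|rewrite Rabs_right in H1]; lra.
Qed.

Lemma zero_geo x K : (forall n, Rabs x <= K * (/2) ^ n) -> x = 0.
Proof.
  intros H.
  destruct (Req_dec x 0) as [|hx]; auto. exfalso.
  assert (hx' : Rabs x > 0) by (apply Rabs_pos_lt; auto).
  assert (hK1 : Rabs K + 1 > 0) by (generalize (Rabs_pos K); lra).
  destruct (pow_lt_1_zero (/2)) with (y := Rabs x / (Rabs K + 1)) as [N hN].
  { rewrite Rabs_right; lra. }
  { apply Rdiv_lt_0_compat; lra. }
  specialize (hN N (le_n N)). specialize (H N).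
  assert (hp : 0 <= (/2)^N) by (apply pow_le; lra).
  rewrite Rabs_right in hN by lra.
  assert (K * (/2)^N <= Rabs K * (/2)^N).
  { apply Rmult_le_compat_r; auto. apply Rle_abs. }
  assert (Rabs K * (/2)^N <= Rabs K * (Rabs x / (Rabs K + 1))).
  { apply Rmult_le_compat_l; [apply Rabs_pos|lra]. }
  assert (Rabs K * (Rabs x / (Rabs K + 1)) < Rabs x).
  { apply Rmult_lt_reg_r with (Rabs K + 1); auto. field_simplify; try lra;
    generalize (Rabs_pos K); nra. }
  lra.
Qed.

Definition LipOp T K (Phi : (R -> R) -> (R -> R)) := forall q1 q2, cont_on T q1 -> cont_on T q2 ->
     forall t, 0 <= t <= T -> forall m,
       is_max_on (fun s => Rabs (q1 s - q2 s)) 0 t m ->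
       Rabs (Phi q1 t - Phi q2 t) <= K * m.

Lemma diffG T M L P G b c a be (hM : M > 0) (hL : L > 0)
  (hPlip : LipOp T M P) (hGlip : LipOp T L G)
  (hsmall : forall s, a <= s <= be -> Rabs (c - b s) <= / (2 * L * M))
  (hbe : be <= T) (ha : 0 <= a)
  q1 q2 u1 u2 (h1 : cont_on T q1) (h2 : cont_on T q2) (hu1 : cont_on T u1) (hu2 : cont_on T u2)
  (agree : forall s, 0 <= s < a -> q1 s = q2 s) B
  (hB : forall s, 0 <= s <= be -> Rabs (q1 s - q2 s) <= B)
  (hu : forall s, 0 <= s <= be -> u1 s - u2 s = (c - b s) * (P q1 s - P q2 s)) :
  forall t, 0 <= t <= be -> Rabs (G u1 t - G u2 t) <= B / 2.
Proof.
  intros t ht.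
  assert (hB0 : 0 <= B) by (specialize (hB 0 ltac:(lra)); generalize (Rabs_pos (q1 0 - q2 0)); lra).
  assert (he : 0 < / (2 * L * M)) by (apply Rinv_0_lt_compat; nra).
  replace (B / 2) with (L * (/ (2 * L * M) * (M * B))) by (field; lra).
  apply (lipK T L G hGlip ltac:(lra) u1 u2 hu1 hu2 t ltac:(lra)).
  intros s hs. rewrite hu by lra. rewrite Rabs_mult.
  destruct (Rlt_le_dec s a) as [hsa|hsa].
  - rewrite (lip0 T M P hPlip ltac:(lra) q1 q2 h1 h2 s ltac:(lra)).
    + rewrite Rminus_diag, Rabs_R0, Rmult_0_r. apply Rmult_le_pos; nra.
    + intros r hr; apply agree; lra.
  - apply Rmult_le_compat; try apply Rabs_pos.
    + apply hsmall; lra.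
    + apply (lipK T M P hPlip ltac:(lra) q1 q2 h1 h2 s ltac:(lra)).
      intros r hr; apply hB; lra.
Qed.

Lemma cont_IcP T P c q : 0 <= T -> (forall q, cont_on T q -> cont_on T (P q)) ->
  cont_on T q -> cont_on T (IcP P c q).
Proof.
  intros hT hPC hq. unfold IcP. apply cont_plus; auto. apply cont_mult; auto. apply cont_const.
Qed.

Lemma uniq_step T M L P G b c w a be (hM : M > 0) (hL : L > 0)
  (hPC : forall q, cont_on T q -> cont_on T (P q))
  (hPlip : LipOp T M P) (hGlip : LipOp T L G)
  (hGl : forall q, cont_on T q -> forall t, 0 <= t <= T -> G (IcP P c q) t = q t)
  (hsmall : forall s, a <= s <= be -> Rabs (c - b s) <= / (2 * L * M))
  (hbe : be <= T) (ha : 0 <= a) (hab : a <= be)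
  q1 q2 (h1 : cont_on T q1) (h2 : cont_on T q2)
  (e1 : forall t, 0 <= t <= be -> q1 t + b t * P q1 t = w t)
  (e2 : forall t, 0 <= t <= be -> q2 t + b t * P q2 t = w t)
  (agree : forall s, 0 <= s < a -> q1 s = q2 s) :
  forall t, 0 <= t <= be -> q1 t = q2 t.
Proof.
  assert (hT : 0 <= T) by lra.
  destruct (bound_exists T q1 q2 be ltac:(lra) h1 h2) as [D hD].
  assert (H : forall n s, 0 <= s <= be -> Rabs (q1 s - q2 s) <= D * (/2)^n).
  { induction n as [|n IH]; intros s hs.
    - simpl; rewrite Rmult_1_r; auto.
    - rewrite <- (hGl q1 h1 s) by lra. rewrite <- (hGl q2 h2 s) by lra.
      replace (D * (/2)^(S n)) with (D * (/2)^n / 2) by (simpl; field).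
      apply (diffG T M L P G b c a be hM hL hPlip hGlip hsmall hbe ha q1 q2
        (IcP P c q1) (IcP P c q2) h1 h2 (cont_IcP T P c q1 hT hPC h1) (cont_IcP T P c q2 hT hPC h2)
        agree (D * (/2)^n) IH); auto.
      intros r hr. unfold IcP. specialize (e1 r hr). specialize (e2 r hr). nra. }
  intros t ht. assert (q1 t - q2 t = 0) by (apply (zero_geo _ D); intro n; apply H; auto). lra.
Qed.

Fixpoint iterF (F : (R -> R) -> (R -> R)) (q0 : R -> R) (n : nat) : R -> R :=
  match n with O => q0 | S n => F (iterF F q0 n) end.

Lemma cont_minus T f g : 0 <= T -> cont_on T f -> cont_on T g -> cont_on T (fun x => f x - g x).
Proof.
  intros hT hf hg. apply cont_from.
  apply (continuity_minus _ _ (cont_to T f hT hf) (cont_to T g hT hg)).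
Qed.

Lemma small_geo K eps : 0 <= K -> eps > 0 -> exists n, K * (/2)^n < eps.
Proof.
  intros hK he.
  destruct (pow_lt_1_zero (/2)) with (y := eps / (K + 1)) as [N hN].
  { rewrite Rabs_right; lra. }
  { apply Rdiv_lt_0_compat; lra. }
  exists N. specialize (hN N (le_n N)).
  assert (hp : 0 <= (/2)^N) by (apply pow_le; lra).
  rewrite Rabs_right in hN by lra.
  apply Rle_lt_trans with ((K+1) * (/2)^N); [nra|].
  apply Rmult_lt_reg_r with (/(K+1)); [apply Rinv_0_lt_compat; lra|].
  replace ((K + 1) * (/ 2) ^ N * / (K + 1)) with ((/2)^N) by (field; lra).
  exact hN.
Qed.

Lemma lim_bound u l y n K : Un_cv u l -> (forall m, (n <= m)%nat -> Rabs (u m - y) <= K) ->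
  Rabs (y - l) <= K.
Proof.
  intros hu hb. destruct (Rle_lt_dec (Rabs (y - l)) K) as [|hlt]; auto. exfalso.
  destruct (hu (Rabs (y - l) - K) ltac:(lra)) as [N hN].
  specialize (hN (Nat.max n N) ltac:(lia)). specialize (hb (Nat.max n N) ltac:(lia)).
  unfold Rdist in hN.
  assert (Rabs (y - l) <= Rabs (y - u (Nat.max n N)) + Rabs (u (Nat.max n N) - l)).
  { replace (y - l) with ((y - u (Nat.max n N)) + (u (Nat.max n N) - l)) by ring. apply Rabs_triang. }
  rewrite (Rabs_minus_sym y (u _)) in H. lra.
Qed.

Lemma exist_step T M L P G b c w a be (hM : M > 0) (hL : L > 0)
  (hPC : forall q, cont_on T q -> cont_on T (P q))
  (hPlip : LipOp T M P) (hGlip : LipOp T L G)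
  (hGC : forall w, cont_on T w -> cont_on T (G w))
  (hGr : forall w, cont_on T w -> forall t, 0 <= t <= T -> IcP P c (G w) t = w t)
  (hGl : forall q, cont_on T q -> forall t, 0 <= t <= T -> G (IcP P c q) t = q t)
  (hsmall : forall s, a <= s <= be -> Rabs (c - b s) <= / (2 * L * M))
  (hbe : be <= T) (ha : 0 <= a) (hab : a <= be)
  (hw : cont_on T w) (hb : cont_on T b)
  q0 (h0 : cont_on T q0)
  (e0 : forall t, 0 <= t < a -> q0 t + b t * P q0 t = w t) :
  exists q, cont_on T q /\ forall t, 0 <= t <= be -> q t + b t * P q t = w t.
Proof.
  assert (hT : 0 <= T) by lra.
  set (V := fun q s => w s + (c - b s) * P q s).
  assert (hV : forall q, cont_on T q -> cont_on T (V q)).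
  { intros q hq. unfold V. apply cont_plus; auto. apply cont_mult; auto.
    apply cont_minus; auto. apply cont_const. }
  set (F := fun q => G (V q)).
  set (qs := iterF F q0).
  assert (HC : forall n, cont_on T (qs n)).
  { induction n as [|n IH]; [exact h0| apply hGC, hV, IH]. }
  assert (HA : forall n t, 0 <= t < a -> qs n t = q0 t).
  { induction n as [|n IH]; intros t ht; [reflexivity|].
    change (G (V (qs n)) t = q0 t).
    rewrite <- (hGl q0 h0 t) by lra.
    apply (lip0 T L G hGlip ltac:(lra)); auto.
    - apply cont_IcP; auto.
    - lra.
    - intros s hs. unfold V, IcP. rewrite <- (e0 s) by lra.
      rewrite (lip0 T M P hPlip ltac:(lra) (qs n) q0 (HC n) h0 s) by (auto; try lra; intros r hr; apply IH; lra).
      ring. }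
  destruct (bound_exists T (qs 1%nat) (qs 0%nat) be ltac:(lra) (HC 1%nat) (HC 0%nat)) as [D hD].
  assert (hD0 : 0 <= D) by (specialize (hD 0 ltac:(lra)); generalize (Rabs_pos (qs 1%nat 0 - qs 0%nat 0)); lra).
  assert (G1 : forall n s, 0 <= s <= be -> Rabs (qs (S n) s - qs n s) <= D * (/2)^n).
  { induction n as [|n IH]; intros s hs.
    - simpl pow. rewrite Rmult_1_r. apply hD; auto.
    - replace (D * (/2)^(S n)) with (D * (/2)^n / 2) by (simpl; field).
      change (Rabs (G (V (qs (S n))) s - G (V (qs n)) s) <= D * (/ 2) ^ n / 2).
      apply (diffG T M L P G b c a be hM hL hPlip hGlip hsmall hbe ha (qs (S n)) (qs n)
        (V (qs (S n))) (V (qs n)) (HC _) (HC _) (hV _ (HC _)) (hV _ (HC _))); auto.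
      + intros r hr. rewrite !HA; auto.
      + intros r hr. unfold V. ring. }
  assert (G2 : forall n k s, 0 <= s <= be ->
     Rabs (qs (n + k)%nat s - qs n s) <= 2 * D * (/2)^n - 2 * D * (/2)^(n + k)).
  { intros n k s hs. induction k as [|k IH].
    - rewrite Nat.add_0_r, Rminus_diag, Rabs_R0. lra.
    - rewrite Nat.add_succ_r.
      replace (qs (S (n + k)) s - qs n s) with ((qs (S (n+k)) s - qs (n+k)%nat s) + (qs (n+k)%nat s - qs n s)) by ring.
      eapply Rle_trans; [apply Rabs_triang|].
      specialize (G1 (n+k)%nat s hs).
      replace ((/2)^(S (n+k))) with ((/2)^(n+k) / 2) by (simpl; field). lra. }
  assert (G3 : forall n m s, (n <= m)%nat -> 0 <= s <= be -> Rabs (qs m s - qs n s) <= 2 * D * (/2)^n).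
  { intros n m s hnm hs. replace m with (n + (m - n))%nat by lia.
    specialize (G2 n (m - n)%nat s hs).
    assert (0 <= (/2)^(n + (m-n))) by (apply pow_le; lra). nra. }
  assert (cau : forall t, Cauchy_crit (fun n => qs n (clamp 0 be t))).
  { intros t eps heps.
    destruct (small_geo (2 * D) eps ltac:(lra) heps) as [N hN].
    exists N. intros n m hn hm. unfold Rdist.
    assert (hc := clamp_in 0 be t ltac:(lra)).
    assert (forall k, (N <= k)%nat -> 2 * D * (/2)^k <= 2 * D * (/2)^N).
    { intros k hk. apply Rmult_le_compat_l; [lra|]. replace k with (N + (k - N))%nat by lia. rewrite pow_add.
      assert (0 <= (/2)^N) by (apply pow_le; lra).
      assert ((/2)^(k-N) <= 1) by (rewrite <- (pow1 (k-N)); apply pow_incr; lra).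
      nra. }
    destruct (Nat.le_ge_cases n m) as [h|h].
    - rewrite Rabs_minus_sym. eapply Rle_lt_trans; [apply G3; auto|].
      specialize (H n hn). lra.
    - eapply Rle_lt_trans; [apply G3; auto|]. specialize (H m hm). lra. }
  set (q := fun t => proj1_sig (R_complete _ (cau t))).
  assert (lim : forall t, Un_cv (fun n => qs n (clamp 0 be t)) (q t))
    by (intro t; exact (proj2_sig (R_complete _ (cau t)))).
  assert (HL : forall n t, Rabs (qs n (clamp 0 be t) - q t) <= 2 * D * (/2)^n).
  { intros n t. apply (lim_bound _ _ _ n _ (lim t)).
    intros m hm. apply G3; auto. apply clamp_in; lra. }
  assert (Cq : cont_on T q).
  { intros t ht eps heps.
    destruct (small_geo (2 * D) (eps / 3) ltac:(lra) ltac:(lra)) as [n hn].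
    assert (hc := clamp_in 0 be t ltac:(lra)).
    destruct (HC n (clamp 0 be t) ltac:(lra) (eps / 3) ltac:(lra)) as [d [hd Hd]].
    exists d; split; auto. intros s hs hst.
    assert (hcs := clamp_in 0 be s ltac:(lra)).
    assert (X := Hd (clamp 0 be s) ltac:(lra) (Rle_lt_trans _ _ _ (clamp_lip 0 be s t ltac:(lra)) hst)).
    assert (Y1 := HL n s). assert (Y2 := HL n t).
    replace (q s - q t) with (- (qs n (clamp 0 be s) - q s) + (qs n (clamp 0 be s) - qs n (clamp 0 be t)) + (qs n (clamp 0 be t) - q t)) by ring.
    eapply Rle_lt_trans; [apply Rabs_triang|].
    eapply Rle_lt_trans; [apply Rplus_le_compat_r; apply Rabs_triang|].
    rewrite Rabs_Ropp. lra. }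
  assert (Aq : forall t, 0 <= t < a -> q t = q0 t).
  { intros t ht.
    assert (q0 t - q t = 0); [|lra].
    apply (zero_geo _ (2 * D)). intro n. specialize (HL n t).
    rewrite clamp_id, HA in HL by lra. exact HL. }
  assert (Fx : forall t, 0 <= t <= be -> F q t = q t).
  { intros t ht. assert (F q t - q t = 0); [|lra].
    apply (zero_geo _ (2 * D)). intro n.
    assert (Z1 : Rabs (F q t - qs (S n) t) <= 2 * D * (/2)^n / 2).
    { apply (diffG T M L P G b c a be hM hL hPlip hGlip hsmall hbe ha q (qs n)
        (V q) (V (qs n)) Cq (HC _) (hV _ Cq) (hV _ (HC _))); auto.
      + intros r hr. rewrite HA, Aq; auto.
      + intros r hr. specialize (HL n r). rewrite clamp_id in HL by lra.
        rewrite Rabs_minus_sym; exact HL.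
      + intros r hr. unfold V. ring. }
    assert (Z2 := HL (S n) t). rewrite clamp_id in Z2 by lra.
    replace ((/2)^(S n)) with ((/2)^n / 2) in Z2 by (simpl; field).
    replace (F q t - q t) with ((F q t - qs (S n) t) + (qs (S n) t - q t)) by ring.
    eapply Rle_trans; [apply Rabs_triang|]. lra. }
  exists q; split; auto.
  intros t ht.
  assert (R1 := hGr (V q) (hV q Cq) t ltac:(lra)).
  unfold IcP in R1.
  rewrite (lip0 T M P hPlip ltac:(lra) (G (V q)) q (hGC _ (hV q Cq)) Cq t ltac:(lra)) in R1
    by (intros r hr; apply (Fx r); lra).
  change (G (V q) t) with (F q t) in R1. rewrite Fx in R1 by auto.
  unfold V in R1. nra.
Qed.

Theorem lemma3p1 (T M L : R) (P : (R -> R) -> (R -> R))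
  (hT : T > 0) (hM : M > 0) (hL : L > 0)
  (hPC : forall q, cont_on T q -> cont_on T (P q))
  (hPlip : forall q1 q2, cont_on T q1 -> cont_on T q2 ->
     forall t, 0 <= t <= T -> forall m,
       is_max_on (fun s => Rabs (q1 s - q2 s)) 0 t m ->
       Rabs (P q1 t - P q2 t) <= M * m)
  (hinv : forall c, c >= 0 ->
     exists G : (R -> R) -> (R -> R),
       (forall w, cont_on T w -> cont_on T (G w)) /\
       (forall w, cont_on T w -> forall t, 0 <= t <= T -> IcP P c (G w) t = w t) /\
       (forall q, cont_on T q -> forall t, 0 <= t <= T -> G (IcP P c q) t = q t) /\
       (forall w1 w2, cont_on T w1 -> cont_on T w2 ->
          forall t, 0 <= t <= T -> forall m,
            is_max_on (fun s => Rabs (w1 s - w2 s)) 0 t m ->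
            Rabs (G w1 t - G w2 t) <= L * m))
  (w b : R -> R) (hw : cont_on T w) (hb : cont_on T b)
  (hbpos : forall t, 0 <= t <= T -> b t >= 0) :
  exists q, cont_on T q /\
    (forall t, 0 <= t <= T -> q t + b t * P q t = w t) /\
    (forall q', cont_on T q' ->
       (forall t, 0 <= t <= T -> q' t + b t * P q' t = w t) ->
       forall t, 0 <= t <= T -> q' t = q t).
Proof.
  assert (he : 0 < / (2 * L * M)) by (apply Rinv_0_lt_compat; nra).
  assert (UC := Heine (fun x => b (clamp 0 T x)) (fun c => 0 <= c <= T) (compact_P3 0 T)
     (fun x _ => cont_to T b ltac:(lra) hb x)).
  destruct (UC (mkposreal _ he)) as [[d hd] Hd]. simpl in Hd.
  set (a := fun k : nat => Rmin (INR k * (d / 2)) T).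
  assert (a_in : forall k, 0 <= a k <= T).
  { intro k. unfold a, Rmin. assert (0 <= INR k) by apply pos_INR.
    destruct Rle_dec; nra. }
  assert (a_mon : forall k, a k <= a (S k)).
  { intro k. unfold a, Rmin. rewrite S_INR. assert (0 <= INR k) by apply pos_INR.
    repeat destruct Rle_dec; nra. }
  assert (a_step : forall k, a (S k) - a k <= d / 2).
  { intro k. unfold a, Rmin. rewrite S_INR. assert (0 <= INR k) by apply pos_INR.
    repeat destruct Rle_dec; nra. }
  assert (a0 : a 0%nat = 0).
  { unfold a, Rmin. simpl. destruct Rle_dec; lra. }
  assert (small : forall k s, a k <= s <= a (S k) -> Rabs (b (a k) - b s) <= / (2 * L * M)).
  { intros k s hs. assert (X := Hd (a k) s (a_in k) ltac:(generalize (a_in k) (a_in (S k)); lra)).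
    rewrite !clamp_id in X by (generalize (a_in k) (a_in (S k)); lra).
    apply Rlt_le, X. specialize (a_step k). rewrite Rabs_left1; lra. }
  destruct (INR_unbounded (T / (d / 2))) as [N hN].
  assert (aN : a (S N) = T).
  { unfold a, Rmin. rewrite S_INR. destruct Rle_dec as [h|h]; auto.
    apply Rle_antisym; auto.
    apply Rmult_gt_compat_r with (r := d / 2) in hN; [|lra].
    replace (T / (d / 2) * (d / 2)) with T in hN by (field; lra). lra. }
  assert (Ex : forall k, exists q, cont_on T q /\ forall t, 0 <= t <= a (S k) -> q t + b t * P q t = w t).
  { induction k as [|k IH].
    - destruct (hinv (b (a 0%nat)) (hbpos _ (a_in _))) as [G [hGC [hGr [hGl hGlip]]]].
      apply (exist_step T M L P G b (b (a 0%nat)) w (a 0%nat) (a 1%nat) hM hL hPC hPlip hGlip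
        hGC hGr hGl (small 0%nat) (proj2 (a_in _)) (proj1 (a_in _)) (a_mon _) hw hb w hw).
      intros t ht. lra.
    - destruct IH as [q0 [h0 e0]].
      destruct (hinv (b (a (S k))) (hbpos _ (a_in _))) as [G [hGC [hGr [hGl hGlip]]]].
      apply (exist_step T M L P G b (b (a (S k))) w (a (S k)) (a (S (S k))) hM hL hPC hPlip hGlip
        hGC hGr hGl (small (S k)) (proj2 (a_in _)) (proj1 (a_in _)) (a_mon _) hw hb q0 h0).
      intros t ht. apply e0. lra. }
  destruct (Ex N) as [q [hq eq]]. rewrite aN in eq.
  exists q; split; [exact hq|split; [exact eq|]].
  intros q' hq' eq'.
  assert (Un : forall k t, 0 <= t <= a (S k) -> q' t = q t).
  { induction k as [|k IH].
    - destruct (hinv (b (a 0%nat)) (hbpos _ (a_in _))) as [G [hGC [hGr [hGl hGlip]]]].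
      apply (uniq_step T M L P G b (b (a 0%nat)) w (a 0%nat) (a 1%nat) hM hL hPC hPlip hGlip
        hGl (small 0%nat) (proj2 (a_in _)) (proj1 (a_in _)) (a_mon _) q' q hq' hq);
        try (intros t ht; first [apply eq' | apply eq]; specialize (a_in 1%nat); lra).
      intros t ht. lra.
    - destruct (hinv (b (a (S k))) (hbpos _ (a_in _))) as [G [hGC [hGr [hGl hGlip]]]].
      apply (uniq_step T M L P G b (b (a (S k))) w (a (S k)) (a (S (S k))) hM hL hPC hPlip hGlip
        hGl (small (S k)) (proj2 (a_in _)) (proj1 (a_in _)) (a_mon _) q' q hq' hq);
        try (intros t ht; first [apply eq' | apply eq]; specialize (a_in (S (S k))); lra).
      intros t ht. apply IH. lra. }
  intros t ht. apply (Un N). rewrite aN. exact ht.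
Qed.
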